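(* Let $D$ be a database, $\mathcal{A}$ an automaton, and $w$ a walk of $D$ belonging to the walk semantics $\llbracket \mathcal{A}\rrbracket_W(D)$ (i.e. $w=\pi_D(r)$ for some run $r$ of $D\times\mathcal{A}$). Then there exist $n\ge 1$ and walks $u_1,v_1,u_2,\dots,v_n,u_{n+1}$ of $D$ such that $w=u_1v_1u_2\cdots v_nu_{n+1}$ (concatenation), every $u_i$ satisfies $\mathrm{src}(u_i)=\mathrm{tgt}(u_i)$, and the walk $v_1v_2\cdots v_n$ belongs to the simple-run semantics $\llbracket \mathcal{A}\rrbracket_{SR}(D)$.
   Context: A database is $D=(\Sigma,V,E,\mathrm{src},\mathrm{tgt},\mathrm{lbl})$ with $\Sigma$ a finite alphabet, $V$ a finite set of vertices, $E$ a finite set of edges, $\mathrm{src},\mathrm{tgt}:E\to V$ and $\mathrm{lbl}:E\to 2^\Sigma$. A walk is a sequence $(n_0,e_0,n_1,\dots,e_{k-1},n_k)$, $k\ge0$, of vertices and edges with $\mathrm{src}(e_i)=n_i$, $\mathrm{tgt}(e_i)=n_{i+1}$; its length is $k$, $\mathrm{src}(w)=n_0$, $\mathrm{tgt}(w)=n_k$, and $\mathrm{lbl}(w)=\{u_0\cdots u_{k-1}: u_i\in\mathrm{lbl}(e_i)\}$. Walks $w,w'$ with $\mathrm{tgt}(w)=\mathrm{src}(w')$ concatenate into $ww'$. A walk is simple if it repeats no vertex. An automaton is $\mathcal{A}=(\Sigma,Q,\Delta,I,F)$ with $\Delta\subseteq Q\times\Sigma\times Q$, initial states $I$ and final states $F$.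 The run database $D\times\mathcal{A}$ is the database with vertex set $V\times Q$, edge set $\{(e,(q,a,q'))\in E\times\Delta : a\in\mathrm{lbl}(e)\}$, where the edge $(e,(q,a,q'))$ has source $(\mathrm{src}(e),q)$, target $(\mathrm{tgt}(e),q')$ and label $\{a\}$. A run is a walk of $D\times\mathcal{A}$ starting in $V\times I$ and ending in $V\times F$. $\pi_D$ maps $(n,q)\mapsto n$, $(e,t)\mapsto e$, and walks componentwise. The walk semantics $\llbracket\mathcal{A}\rrbracket_W(D)$ is the bag $\{\pi_D(r): r \text{ run of } D\times\mathcal{A}\}$, and the simple-run semantics $\llbracket\mathcal{A}\rrbracket_{SR}(D)$ is the bag $\{\pi_D(r): r\text{ simple run of }D\times\mathcal{A}\}$ (a walk's multiplicity is the number of such runs projecting to it). *)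

(* Defs.v *)
From mathcomp Require Import all_boot.
Set Implicit Arguments. Unset Strict Implicit. Unset Printing Implicit Defensive.

(* A walk (n0, [e0; ...; e_{k-1}]) : its start vertex and its edge list.
   Validity (src e0 = n0, src e_{i+1} = tgt e_i) is the predicate is_walk. *)
Definition walk (V E : Type) := (V * seq E)%type.

Section Walks.
Variables (V E : eqType) (src tgt : E -> V).

Fixpoint is_walk_from (n : V) (es : seq E) : bool :=
  match es with
  | [::] => true
  | e :: es' => (src e == n) && is_walk_from (tgt e) es'
  end.

Definition is_walk (w : walk V E) : bool := is_walk_from w.1 w.2.
Definition wsrc (w : walk V E) : V := w.1.
Definition wtgt (w : walk V E) : V := last w.1 (map tgt w.2).
Definition wverts (w : walk V E) : seq V := w.1 :: map tgt w.2.
Definition is_simple (w : walk V E) : bool := uniq (wverts w).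

(* concatenation ww' (meaningful when wtgt w = wsrc w') *)
Definition wcat (w w' : walk V E) : walk V E := (w.1, w.2 ++ w'.2).
Definition wconcat (w : walk V E) (ws : seq (walk V E)) : walk V E :=
  foldl wcat w ws.
Definition composable (w : walk V E) (ws : seq (walk V E)) : bool :=
  path (fun a b => wtgt a == wsrc b) w ws.
End Walks.

Section RunDB.
Variables (Sig V E Q : finType) (src tgt : E -> V) (lbl : E -> {set Sig})
          (Delta : {set Q * Sig * Q}) (I F : {set Q}).

(* edges of D x A are pairs (e, (q,a,q')) with (q,a,q') in Delta and a in lbl e *)
Definition rEdge := (E * (Q * Sig * Q))%type.
Definition is_rEdge (x : rEdge) : bool := (x.2 \in Delta) && (x.2.1.2 \in lbl x.1).
Definition rsrc (x : rEdge) : V * Q := (src x.1, x.2.1.1).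
Definition rtgt (x : rEdge) : V * Q := (tgt x.1, x.2.2).

Definition is_run (r : walk (V * Q) rEdge) : bool :=
  [&& is_walk rsrc rtgt r, all is_rEdge r.2, (wsrc r).2 \in I
    & (wtgt rtgt r).2 \in F].

Definition projD (r : walk (V * Q) rEdge) : walk V E := (r.1.1, map fst r.2).

Definition in_walk_sem (w : walk V E) : Prop :=
  exists r, is_run r /\ projD r = w.
Definition in_sr_sem (w : walk V E) : Prop :=
  exists r, [/\ is_run r, is_simple rtgt r & projD r = w].
End RunDB.

(* Main.v *)
Require Import Defs.
From mathcomp Require Import all_boot.
Set Implicit Arguments. Unset Strict Implicit. Unset Printing Implicit Defensive.

Lemma wconcatE (V E : eqType) (w : walk V E) (ws : seq (walk V E)) :
  wconcat w ws = (w.1, w.2 ++ flatten (map snd ws)).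
Proof.
elim: ws w => [|x ws IH] w /=; first by rewrite cats0; case: w.
by rewrite IH /wcat /= catA.
Qed.

Lemma is_walk_from_cat (V E : eqType) (src tgt : E -> V) n s1 s2 :
  is_walk_from src tgt n (s1 ++ s2) =
  is_walk_from src tgt n s1 && is_walk_from src tgt (last n (map tgt s1)) s2.
Proof.
elim: s1 n => [|e s1 IH] n //=; by rewrite IH andbA.
Qed.

Section Key.
Variables (Sig V E Q : finType) (src tgt : E -> V) (lbl : E -> {set Sig})
          (Delta : {set Q * Sig * Q}) (I F : {set Q}).
Local Notation RS := (@rsrc Sig V E Q src).
Local Notation RT := (@rtgt Sig V E Q tgt).
Local Notation PD := (@projD Sig V E Q).

Lemma proj_walk x0 (es : seq (rEdge Sig E Q)) : is_walk_from RS RT x0 es ->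
  is_walk_from src tgt x0.1 (map fst es).
Proof.
elim: es x0 => [|e es IH] x0 //= /andP [/eqP <- H].
by rewrite eqxx /=; apply: (IH (rtgt tgt e)).
Qed.

Lemma proj_last x0 (es : seq (rEdge Sig E Q)) :
  last x0.1 (map tgt (map fst es)) = (last x0 (map RT es)).1.
Proof. by elim: es x0 => [|e es IH] x0 //=; exact: (IH (RT e)). Qed.

Definition Dconds (w : walk V E) (u1 : walk V E) (ps : seq (walk V E * walk V E))
   (wv : walk V E) :=
    let ws := flatten [seq [:: p.1; p.2] | p <- ps] in
    let us := u1 :: map snd ps in
    let vs := map fst ps in
    [/\ 1 <= size ps,
        all (is_walk src tgt) (u1 :: ws) && composable tgt u1 ws,
        w = wconcat u1 ws,
        all (fun u => wsrc u == wtgt tgt u) us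
      & wconcat (head u1 vs) (behead vs) = wv].

Lemma key n x0 (es : seq (rEdge Sig E Q)) : size es <= n ->
  is_walk_from RS RT x0 es -> all (is_rEdge lbl Delta) es ->
  exists es' u1 ps,
   [/\ is_walk_from RS RT x0 es', all (is_rEdge lbl Delta) es',
       uniq (x0 :: map RT es'),
       last x0 (map RT es') = last x0 (map RT es) /\
       {subset (map RT es') <= (x0 :: map RT es)}
     & Dconds (PD (x0, es)) u1 ps (PD (x0, es'))].
Proof.
elim: n x0 es => [|n IH] x0 es.
  rewrite leqn0 => /nilP -> _ _.
  exists [::], (x0.1, [::]), [:: ((x0.1, [::]), (x0.1, [::]))].
  by split => //; rewrite /Dconds /wtgt /=; split; rewrite ?eqxx.
move=> Hsz Hw Ha.
case: (boolP (x0 \in map RT es)) => Hin.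
  case/mapP: Hin => e He Hx.
  case/splitPr: He Hw Ha Hsz => es1 es2.
  rewrite -cat_rcons is_walk_from_cat all_cat size_cat size_rcons.
  move=> /andP [Hw1 Hw2] /andP [Ha1 Ha2] Hsz.
  have Hl : last x0 (map RT (rcons es1 e)) = x0 by rewrite map_rcons last_rcons.
  rewrite Hl in Hw2.
  have Hsz2 : size es2 <= n by rewrite addSn ltnS in Hsz; apply: leq_trans Hsz; apply: leq_addl.
  have [es' [u1 [ps [H1 H2 H3 [H4 H5] /[dup] DD [D1 D2 D3 D4 D5]]]]] := IH x0 es2 Hsz2 Hw2 Ha2.
  set loop := rcons es1 e.
  have Hu1 : u1.1 = x0.1 by move: D3; rewrite wconcatE /projD => -[->].
  have Hlp : last x0.1 (map tgt (map fst loop)) = x0.1 by rewrite proj_last Hl.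
  have Htu : wtgt tgt (x0.1, map fst loop ++ u1.2) = wtgt tgt u1.
    by rewrite /wtgt /= map_cat last_cat Hlp -Hu1.
  exists es', (x0.1, map fst loop ++ u1.2), ps.
  split => //; first split.
  - by rewrite H4 map_cat last_cat Hl.
  - move=> y /H5; rewrite !inE map_cat mem_cat => /orP [->|->]; rewrite ?orbT //.
  rewrite /Dconds; split => //.
  - case/andP: D2 => Hall Hc; move: Hall; rewrite -cat1s all_cat => /andP [Hu Hws].
    rewrite -cat1s all_cat Hws andbT /= andbT /is_walk /= is_walk_from_cat (proj_walk Hw1) Hlp.
    apply/andP; split; first by move: Hu; rewrite /= andbT /is_walk Hu1.
    move: Hc; rewrite /composable.
    case: (flatten _) => //= a l; by rewrite Htu.
  - rewrite /projD /= wconcatE /= map_cat -catA; congr (_, _ ++ _).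
    by move: D3; rewrite wconcatE /projD /= => [[_ ->]].
  - move: D4 => /= /andP [Hc ->]; rewrite andbT /wsrc /= Htu.
    by rewrite -Hu1.
  - by clear DD; case: ps D1 D5 {D2 D3 D4}.
move: Hin Hsz Hw Ha; case: es => [|e rest].
  move=> _ _ _ _.
  exists [::], (x0.1, [::]), [:: ((x0.1, [::]), (x0.1, [::]))].
  by split => //; rewrite /Dconds /wtgt /=; split; rewrite ?eqxx.
move=> Hin /= Hsz /andP [/eqP He Hw] /andP [Hae Ha].
have [es' [u1 [ps [H1 H2 H3 [H4 H5] /[dup] DD [D1 D2 D3 D4 D5]]]]] := IH _ rest Hsz Hw Ha.
have Hu1 : u1.1 = (RT e).1 by move: D3; rewrite wconcatE /projD => -[<-].
exists (e :: es'), (x0.1, [::]), (((x0.1, [:: e.1]), u1) :: ps).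
split => //=.
- by rewrite He eqxx H1.
- by rewrite Hae H2.
- apply/andP; split; last exact: H3.
  apply/negP => Hx; move/negP: Hin; apply.
  move: Hx; rewrite inE => /orP [/eqP ->|/H5 //]; by rewrite /= inE eqxx.
- split; first exact: H4.
  move=> y; rewrite !inE => /orP [->|/H5]; rewrite ?orbT //.
  by rewrite inE => ->; rewrite orbT.
rewrite /Dconds; split => //=.
- case/andP: D2 => Hall Hc; move: Hall; rewrite -cat1s all_cat => /andP [Hu Hws].
  have Hu' : is_walk src tgt u1 by move: Hu => /andP [].
  rewrite Hu' Hws Hc /is_walk /= -He eqxx /wtgt /wsrc /= Hu1 eqxx.
  done.
- rewrite wconcatE /=; move: D3; rewrite wconcatE /projD /= => [[_ ->]].
  by rewrite -He.
- by rewrite /wsrc /wtgt /= eqxx.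
- rewrite wconcatE /projD /=; congr (_, _ :: _).
  clear DD; case: ps D1 D5 {D2 D3 D4} => //= p ps _; rewrite wconcatE /projD => [[_ <-]].
  by [].
Qed.
End Key.

(* w = u1 v1 u2 ... vn u_{n+1}, with ps = [:: (v1,u2); ...; (vn,u_{n+1})] *)
Theorem lemma13 (Sig V E Q : finType) (src tgt : E -> V) (lbl : E -> {set Sig})
    (Delta : {set Q * Sig * Q}) (I F : {set Q}) (w : walk V E) :
  in_walk_sem src tgt lbl Delta I F w ->
  exists (u1 : walk V E) (ps : seq (walk V E * walk V E)),
    let ws := flatten [seq [:: p.1; p.2] | p <- ps] in
    let us := u1 :: map snd ps in
    let vs := map fst ps in
    [/\ 1 <= size ps,
        all (is_walk src tgt) (u1 :: ws) && composable tgt u1 ws,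
        w = wconcat u1 ws,
        all (fun u => wsrc u == wtgt tgt u) us
      & in_sr_sem src tgt lbl Delta I F (wconcat (head u1 vs) (behead vs))].
Proof.
case=> [[x0 es] [/and4P [Hw Ha HI HF] <-]].
have [es' [u1 [ps [H1 H2 H3 [H4 H5] [D1 D2 D3 D4 D5]]]]] :=
  @key Sig V E Q src tgt lbl Delta _ x0 es (leqnn (size es)) Hw Ha.
exists u1, ps; split => //.
rewrite D5; exists (x0, es'); split => //.
by rewrite /is_run /is_walk /= H1 H2 HI /wtgt /= H4.
Qed.
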